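(* Let a product two-action game with $m$ players be given, and let $\pi\in\mathrm{Der}_m$. Then the set $EC(\pi)$ consists of exactly one point, namely $\underline\gamma$ with $\gamma^j=a^{\pi(j)}_j$ for all $j\in\mathcal A$, and this point is a Nash equilibrium (with all $\gamma^j\in(0,1)$). In particular the game has at least $!m$ Nash equilibria in the open cube $(0,1)^m$.
   Context: Fix an integer $m\ge 1$ and $\mathcal A=\{1,\dots,m\}$. A two-action game is a finite game in normal form with player set $\mathcal A$ in which each player $i$ has exactly two pure strategies $s^i_0,s^i_1$, together with utility functions $U^i:S\to\mathbb R$, where $S=\prod_{i\in\mathcal A}\{s^i_0,s^i_1\}$. A mixed strategy combination is identified with $\underline\gamma=(\gamma^1,\dots,\gamma^m)\in[0,1]^m$, where $\gamma^i$ is the probability with which player $i$ plays $s^i_1$. The expected utility $V^i$ is the multilinear extension $V^i(\underline\gamma)=\sum_{(j_1,\dots,j_m)\in\{0,1\}^m}\prod_{k=1}^m p_k(j_k)\,U^i(s^1_{j_1},\dots,s^m_{j_m})$ with $p_k(1)=\gamma^k$, $p_k(0)=1-\gamma^k$. Write $\underline\gamma^{-i}=(\gamma^j)_{j\ne i}$ and $\lambda^i(\underline\gamma^{-i}):=V^i(\underline\gamma)|_{\gamma^i=1}-V^i(\underline\gamma)|_{\gamma^i=0}$. A Nash equilibrium is a point $\underline\gamma\in[0,1]^m$ such that for every $i$: $\lambda^i(\underline\gamma^{-i})=0$ if $0<\gamma^i<1$; $\lambda^i(\underline\gamma^{-i})\le 0$ if $\gamma^i=0$; $\lambda^i(\underline\gamma^{-i})\ge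 0$ if $\gamma^i=1$. For $\underline\gamma$ put $L_0(\underline\gamma)=\{i:\gamma^i=0\}$, $L_1(\underline\gamma)=\{i:\gamma^i=1\}$, $L(\underline\gamma)=L_0(\underline\gamma)\cup L_1(\underline\gamma)$. A two-action game is a product two-action game if there exist $\underline v=(v_1,\dots,v_m)\in\{0,1\}^m$ and numbers $a^i_j\in(0,1)$ for $i,j\in\mathcal A$, $i\ne j$, with $a^{i_1}_j\neq a^{i_2}_j$ whenever $i_1\neq i_2$ and both differ from $j$, such that $\lambda^i(\underline\gamma^{-i})=(-1)^{v_i}\prod_{j\in\mathcal A\setminus\{i\}}(\gamma^j-a^i_j)$ for every $i\in\mathcal A$. For $\pi\in S_m$, $F(\pi)=\{i\in\mathcal A:\pi(i)=i\}$; $\mathrm{Der}_m$ is the set of $\pi\in S_m$ with $F(\pi)=\emptyset$; $!m=|\mathrm{Der}_m|$. $EC(\pi):=\{\underline\gamma\in[0,1]^m \mid L(\underline\gamma)=F(\pi),\ \gamma^j=a^{\pi(j)}_j \text{ for all } j\notin F(\pi)\}$. *)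

(* Defs.v *)
(* Players are 'I_m; a pure profile is s : {ffun 'I_m -> bool}
   (s i = true means player i plays s^i_1); a mixed profile is
   g : {ffun 'I_m -> R}, g i = probability that player i plays s^i_1. *)
From mathcomp Require Import all_boot all_order all_algebra all_fingroup.
Set Implicit Arguments. Unset Strict Implicit. Unset Printing Implicit Defensive.
Import Order.TTheory GRing.Theory Num.Theory.
Local Open Scope ring_scope.

Section Game.
Variables (R : realFieldType) (m : nat).

Definition utilities := 'I_m -> {ffun 'I_m -> bool} -> R.

Definition expV (U : utilities) (i : 'I_m) (g : {ffun 'I_m -> R}) : R :=
  \sum_(s : {ffun 'I_m -> bool})
     (\prod_(k < m) (if s k then g k else 1 - g k)) * U i s.

Definition setc (g : {ffun 'I_m -> R}) (i : 'I_m) (x : R) : {ffun 'I_m -> R} :=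
  [ffun k => if k == i then x else g k].

Definition lambda (U : utilities) (i : 'I_m) (g : {ffun 'I_m -> R}) : R :=
  expV U i (setc g i 1) - expV U i (setc g i 0).

Definition in_cube (g : {ffun 'I_m -> R}) : Prop := forall j, 0 <= g j <= 1.
Definition in_open_cube (g : {ffun 'I_m -> R}) : Prop := forall j, 0 < g j < 1.

Definition Nash (U : utilities) (g : {ffun 'I_m -> R}) : Prop :=
  in_cube g /\
  forall i, [/\ (0 < g i < 1 -> lambda U i g = 0),
                (g i = 0 -> lambda U i g <= 0) &
                (g i = 1 -> 0 <= lambda U i g)].

(* product two-action game with data v, a (a i j = a^i_j) *)
Definition product_game (U : utilities) (v : 'I_m -> bool) (a : 'I_m -> 'I_m -> R)
  : Prop :=
  [/\ (forall i j, i != j -> 0 < a i j < 1),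
      (forall i1 i2 j, i1 != i2 -> i1 != j -> i2 != j -> a i1 j != a i2 j) &
      (forall i g, in_cube g ->
         lambda U i g = (-1) ^+ v i * \prod_(j < m | j != i) (g j - a i j))].

Definition derangementb (p : {perm 'I_m}) : bool := [forall i, p i != i].
Definition subfactorial : nat := #|[set p : {perm 'I_m} | derangementb p]|.

Definition Lset (g : {ffun 'I_m -> R}) (j : 'I_m) : Prop := g j = 0 \/ g j = 1.

Definition EC (a : 'I_m -> 'I_m -> R) (p : {perm 'I_m}) (g : {ffun 'I_m -> R})
  : Prop :=
  [/\ in_cube g,
      (forall j, Lset g j <-> p j = j) &
      (forall j, p j != j -> g j = a (p j) j)].

End Game.

(* Main.v *)
Require Import Defs.
From mathcomp Require Import all_boot all_order all_algebra all_fingroup.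
Import Order.TTheory GRing.Theory Num.Theory.
Local Open Scope ring_scope.

Theorem theorem3p7 (R : realFieldType) (m : nat) (hm : (0 < m)%N)
  (U : utilities R m) (v : 'I_m -> bool) (a : 'I_m -> 'I_m -> R) :
  product_game U v a ->
  (forall p : {perm 'I_m}, derangementb p ->
     let g := [ffun j => a (p j) j] in
     [/\ EC a p g,
         (forall h, EC a p h -> h = g),
         Nash U g &
         in_open_cube g]) /\
  (exists s : seq {ffun 'I_m -> R},
     [/\ uniq s, (subfactorial m <= size s)%N &
         forall g, g \in s -> Nash U g /\ in_open_cube g]).
Proof.
case=> ha hd hl.
have P1 : forall p : {perm 'I_m}, derangementb p ->
     let g := [ffun j => a (p j) j] in
     [/\ EC a p g,
         (forall h, EC a p h -> h = g),
         Nash U g &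
         in_open_cube g].
  move=> p /forallP dp g.
  have oc : in_open_cube g.
    move=> j; rewrite ffunE; apply: ha; exact: dp.
  have ic : in_cube g.
    move=> j; have /andP[h1 h2] := oc j.
    by rewrite (ltW h1) (ltW h2).
  split => //.
  - split => // j.
      split.
        case=> E; have := oc j; rewrite E ?ltxx ?andbF //.
      move=> E; have := dp j; by rewrite E eqxx.
    by move=> _; rewrite ffunE.
  - move=> h [_ _ H]; apply/ffunP => j; rewrite ffunE; apply: H; exact: dp.
  - split => // i.
    have lz : lambda U i g = 0.
      rewrite hl //.
      set k := (p^-1)%g i.
      have pk : p k = i by rewrite /k permKV.
      have ki : k != i by rewrite -pk eq_sym; exact: dp.
      rewrite (bigD1 k) //= ffunE pk subrr mul0r mulr0 //.
    by rewrite lz lexx.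
split; first exact: P1.
pose D := enum [set p : {perm 'I_m} | derangementb p].
exists (map (fun p : {perm 'I_m} => [ffun j => a (p j) j]) D).
split.
- rewrite map_inj_in_uniq ?enum_uniq //.
  move=> p q; rewrite !mem_enum !inE => /forallP dp /forallP dq E.
  apply/permP => j; apply/eqP; apply/negPn/negP => ne.
  have := congr1 (fun f : {ffun 'I_m -> R} => f j) E; rewrite /= !ffunE.
  apply/eqP; apply: hd; [exact: ne | exact: (dp j) | exact: (dq j)].
- by rewrite size_map /D -cardE /subfactorial.
- move=> g /mapP [p]; rewrite mem_enum inE => dp ->.
  by case: (P1 p dp).
Qed.
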